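(* Let $G$ be a finite graph whose edges are totally ordered and labelled $e_1<e_2<\dots<e_m$. Suppose that for some $i$ and some $k>0$ the edges $e_i,e_{i+1},\dots,e_{i+k}$ are all positive and form a path $P_{k+1}$ in $G$, traversed in this order (so consecutive edges $e_{i+r},e_{i+r+1}$ share an interior vertex of the path), and that every interior vertex of this path has degree exactly two in $G$. Let $S$ be any spanning tree of $G$. Then the subword of the activity word $a(S)$ formed by the letters at positions $i,\dots,i+k$ (i.e. $a(e_i,S)a(e_{i+1},S)\cdots a(e_{i+k},S)$) is one of the following: (1) when $S$ contains all edges of $P_{k+1}$: $L L\cdots L$ or $D D\cdots D$ (all $k+1$ letters equal); (2) when $S$ omits exactly the edge $e_{i+j}$ of $P_{k+1}$ for some $0<j\le k$: $L^{j}\,d\,D^{k-j}$, i.e. $e_i,\dots,e_{i+j-1}$ are labelled $L$, $e_{i+j}$ is labelled $d$, and $e_{i+j+1},\dots,e_{i+k}$ are labelled $D$; (3) when $S$ omits exactly the first edge $e_i$: $\ell\, D^{k}$ or $d\,D^{k}$.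
   Context: Tutte's activity: let $G$ be a graph with signed edges (each edge positive or negative) whose $m$ edges are totally ordered. For a spanning tree $S$ of $G$ and an edge $e$: if $e\in S$ and $e$ is positive, $e$ is internally active, letter $L$, if $e$ is the lowest-ordered edge of $G$ that reconnects the two components of $S-\{e\}$, and internally inactive, letter $D$, otherwise. If $e\notin S$ and $e$ is positive, $e$ is externally active, letter $\ell$, if $e$ is the lowest-ordered edge of the unique cycle contained in $S\cup\{e\}$, and externally inactive, letter $d$, otherwise. For negative edges the same rules give the barred letters $\overline{L},\overline{D},\overline{\ell},\overline{d}$. The letter of $e$ is denoted $a(e,S)$, and the activity word $a(S)$ is the word of length $m$ whose $r$-th letter is $a(e_r,S)$. *)

(* Defs.v *)
From mathcomp Require Import all_boot.
Set Implicit Arguments. Unset Strict Implicit. Unset Printing Implicit Defensive.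

(* A finite (multi)graph with signed, totally ordered edges:
   vertices form a finType V, the m edges are e_0 < e_1 < ... < e_(m-1),
   i.e. the ordinals 'I_m ordered by their value; [ends e] gives the two
   endpoints of edge e and [pos e] is true iff e is positive. *)

Section Tutte.
Variables (V : finType) (m : nat) (ends : 'I_m -> V * V) (pos : 'I_m -> bool).

Definition joins (f : 'I_m) (x y : V) : bool :=
  (((ends f).1 == x) && ((ends f).2 == y)) || (((ends f).1 == y) && ((ends f).2 == x)).

Definition adjF (F : {set 'I_m}) : rel V := fun x y => [exists f in F, joins f x y].

Definition conn (F : {set 'I_m}) (x y : V) : bool := connect (adjF F) x y.

Definition connectedF (F : {set 'I_m}) : Prop := forall x y : V, conn F x y.

(* (V, F) is acyclic: no edge of F lies on a cycle of F, i.e. removing any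
   edge f of F disconnects its endpoints (this also excludes loops). *)
Definition acyclicF (F : {set 'I_m}) : Prop :=
  forall f, f \in F -> ~~ conn (F :\ f) (ends f).1 (ends f).2.

Definition spanning_tree (S : {set 'I_m}) : Prop := connectedF S /\ acyclicF S.

(* degree of a vertex (a loop counts twice) *)
Definition degree (x : V) : nat :=
  \sum_(f : 'I_m) (((ends f).1 == x) + ((ends f).2 == x)).

Definition reconnects (S : {set 'I_m}) (e f : 'I_m) : bool :=
  ~~ conn (S :\ e) (ends f).1 (ends f).2.

Definition int_active (S : {set 'I_m}) (e : 'I_m) : bool :=
  [forall f, reconnects S e f ==> (e <= f)%N].

Definition on_cycle (S : {set 'I_m}) (e f : 'I_m) : bool :=
  (f \in e |: S) && conn ((e |: S) :\ f) (ends f).1 (ends f).2.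

Definition ext_active (S : {set 'I_m}) (e : 'I_m) : bool :=
  [forall f, on_cycle S e f ==> (e <= f)%N].

End Tutte.

Inductive letter := L | D | l | d | Lbar | Dbar | lbar | dbar.

Definition activity (V : finType) (m : nat) (ends : 'I_m -> V * V)
    (pos : 'I_m -> bool) (S : {set 'I_m}) (e : 'I_m) : letter :=
  if e \in S then
    (if int_active ends S e then (if pos e then L else Lbar)
     else (if pos e then D else Dbar))
  else
    (if ext_active ends S e then (if pos e then l else lbar)
     else (if pos e then d else dbar)).

(* Main.v *)
Require Import Defs.
From mathcomp Require Import all_boot zify.
Set Implicit Arguments. Unset Strict Implicit. Unset Printing Implicit Defensive.

Section Gen.
Variables (V : finType) (m : nat) (ends : 'I_m -> V * V).

Lemma joins_sym f x y : joins ends f x y = joins ends f y x.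
Proof. by rewrite /joins orbC. Qed.

Lemma adjF_sym (F : {set 'I_m}) : symmetric (adjF ends F).
Proof.
move=> x y; apply/existsP/existsP=> [][f /andP[fF jf]]; exists f;
  by rewrite fF joins_sym.
Qed.

Lemma conn_sym (F : {set 'I_m}) x y : conn ends F x y = conn ends F y x.
Proof. exact: (sym_connect_sym (adjF_sym F)). Qed.

Lemma conn_trans (F : {set 'I_m}) x y z : conn ends F x y -> conn ends F y z -> conn ends F x z.
Proof. exact: connect_trans. Qed.

Lemma conn_refl (F : {set 'I_m}) x : conn ends F x x.
Proof. exact: connect0. Qed.

Lemma conn_edge (F : {set 'I_m}) f x y : f \in F -> joins ends f x y -> conn ends F x y.
Proof. move=> fF j; apply: connect1; apply/existsP; exists f; by rewrite fF. Qed.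

Lemma conn_mono (F F' : {set 'I_m}) x y : F \subset F' -> conn ends F x y -> conn ends F' x y.
Proof.
move=> sub; apply: connect_sub => a b /existsP[f /andP[fF j]].
apply: connect1; apply/existsP; exists f; by rewrite (subsetP sub).
Qed.

Lemma conn_closed (F : {set 'I_m}) (C : pred V) x y :
  (forall a b f, a \in C -> f \in F -> joins ends f a b -> b \in C) ->
  conn ends F x y -> x \in C -> y \in C.
Proof.
move=> cl /connectP[p pth ->]; elim: p x pth => [|z p IH] x //= /andP[a pth] xC.
apply: IH pth _; case/existsP: a => f /andP[fF j]; exact: cl j.
Qed.

Lemma joins_other f a b z : a != b -> joins ends f a b -> joins ends f a z -> z = b.
Proof.
rewrite /joins => ab.
case: (ends f) => p q /=.
case: (eqVneq p a) => [->|pa]; case: (eqVneq q a) => [->|qa];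
 rewrite ?eqxx /= ?andbF ?andbT //=.
- by rewrite (negbTE ab).
- by rewrite !orbF => /eqP<- /eqP->.
- by move=> /eqP<- /eqP->.
Qed.

Lemma joins_touch f x z : joins ends f x z -> ((ends f).1 == x) || ((ends f).2 == x).
Proof. by rewrite /joins; case/orP=> /andP[h1 h2]; rewrite ?h1 ?h2 ?orbT. Qed.

Lemma joins_ends f : joins ends f (ends f).1 (ends f).2.
Proof. by rewrite /joins !eqxx. Qed.

Lemma tree_split (S : {set 'I_m}) e x : connectedF ends S -> e \in S ->
  conn ends (S :\ e) (ends e).1 x || conn ends (S :\ e) (ends e).2 x.
Proof.
move=> cS eS.
pose C := [pred z | conn ends (S :\ e) (ends e).1 z || conn ends (S :\ e) (ends e).2 z].
apply: (@conn_closed S C (ends e).1 x) => //; last by rewrite inE conn_refl.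
move=> a b f; rewrite !inE => aC fS j.
case: (eqVneq f e) => [fe|fne].
  subst f; move: j; rewrite /joins.
  by case/orP=> /andP[h1 h2]; [rewrite -(eqP h2) | rewrite -(eqP h1)]; rewrite conn_refl ?orbT.
have fS' : f \in S :\ e by rewrite !inE fne fS.
by case/orP: aC => c; apply/orP; [left|right]; apply: conn_trans c (conn_edge fS' j).
Qed.

Lemma two_class (S : {set 'I_m}) e u p q : connectedF ends S -> e \in S ->
  ~~ conn ends (S :\ e) u p -> ~~ conn ends (S :\ e) u q -> conn ends (S :\ e) p q.
Proof.
move=> cS eS up uq.

have [c1|c1] := orP (tree_split u cS eS);
 [ have [c2|c2] := orP (tree_split p cS eS) | have [c2|c2] := orP (tree_split p cS eS) ].
- by case/negP: up; apply: conn_trans c2; rewrite conn_sym.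
- have [c3|c3] := orP (tree_split q cS eS).
    by case/negP: uq; apply: conn_trans c3; rewrite conn_sym.
  by apply: conn_trans c3; rewrite conn_sym.
- have [c3|c3] := orP (tree_split q cS eS).
    by apply: conn_trans c3; rewrite conn_sym.
  by case/negP: uq; apply: conn_trans c3; rewrite conn_sym.
- by case/negP: up; apply: conn_trans c2; rewrite conn_sym.
Qed.

Lemma two_classE (S : {set 'I_m}) e u p q : connectedF ends S -> e \in S ->
  conn ends (S :\ e) p q = (conn ends (S :\ e) u p == conn ends (S :\ e) u q).
Proof.
move=> cS eS; apply/idP/idP.
  move=> pq; apply/eqP; apply/idP/idP => h; first exact: conn_trans h pq.
  by apply: (conn_trans h); rewrite conn_sym.
case: (boolP (conn ends (S :\ e) u p)) => up /eqP uq.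
  have uq' : conn ends (S :\ e) u q by rewrite -uq.
  by apply: (@conn_trans _ _ u) => //; rewrite conn_sym.
have uq' : ~~ conn ends (S :\ e) u q by rewrite -uq.
exact: (two_class cS eS up uq').
Qed.

Lemma touchC (S : {set 'I_m}) e f (C : pred V) : connectedF ends S -> e \in S ->
  reconnects ends S e f ->
  (forall a b g, a \in C -> g \in S :\ e -> joins ends g a b -> b \in C) ->
  ((ends e).1 \in C) || ((ends e).2 \in C) ->
  ((ends f).1 \in C) || ((ends f).2 \in C).
Proof.
move=> cS eS rec cl eC.
have cl' := fun x y => @conn_closed (S :\ e) C x y cl.
move: rec; rewrite /reconnects.
have [c1|c1] := orP (tree_split (ends f).1 cS eS);
have [c2|c2] := orP (tree_split (ends f).2 cS eS).
- by rewrite (conn_trans _ c2) // conn_sym.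
- case/orP: eC => h; [by rewrite (cl' _ _ c1 h) | by rewrite (cl' _ _ c2 h) orbT].
- case/orP: eC => h; [by rewrite (cl' _ _ c2 h) orbT | by rewrite (cl' _ _ c1 h)].
- by rewrite (conn_trans _ c2) // conn_sym.
Qed.

End Gen.

Section Main.
Variables (V : finType) (m : nat) (ends : 'I_m -> V * V)
    (pos : 'I_m -> bool) (i k : nat) (v : nat -> V).
Hypotheses (hk : (0 < k)%N) (hik : (i + k < m)%N)
    (hvinj : forall r s, (r <= k.+1)%N -> (s <= k.+1)%N -> v r = v s -> r = s)
    (hpath : forall e : 'I_m, (i <= e <= i + k)%N ->
        joins ends e (v (e - i)%N) (v (e - i).+1))
    (hdeg : forall r, (1 <= r <= k)%N -> degree ends (v r) = 2).

Definition pe (t : nat) : 'I_m := insubd (Ordinal hik) (i + t).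

Lemma pe_val t : t <= k -> nat_of_ord (pe t) = i + t.
Proof. move=> tk; apply: insubdK => /=; lia. Qed.

Lemma vneq r s : r <= k.+1 -> s <= k.+1 -> r != s -> v r != v s.
Proof. move=> rk sk rs; apply/eqP => h; move/eqP: rs; apply; exact: hvinj h. Qed.

Lemma hpath' t (e : 'I_m) : t <= k -> nat_of_ord e = i + t -> joins ends e (v t) (v t.+1).
Proof.
move=> tk et; have := hpath (e := e); rewrite et.
have -> : i + t - i = t by lia.
apply; lia.
Qed.

Lemma deg_touch s (g : 'I_m) : 1 <= s <= k ->
  ((ends g).1 == v s) || ((ends g).2 == v s) -> nat_of_ord g = i + s.-1 \/ nat_of_ord g = i + s.
Proof.
move=> sk tg.
case: (eqVneq (nat_of_ord g) (i + s.-1)) => [->|n1]; first by left.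
case: (eqVneq (nat_of_ord g) (i + s)) => [->|n2]; first by right.
exfalso.
have hsum := hdeg sk; rewrite /degree in hsum.
pose F (f : 'I_m) := (((ends f).1 == v s) + ((ends f).2 == v s))%N.
change (\sum_(f : 'I_m) F f = 2) in hsum.
have F1 : forall f : 'I_m, ((ends f).1 == v s) || ((ends f).2 == v s) -> 1 <= F f.
  by move=> f; rewrite /F; case: (_ == _); case: (_ == _).
have a1 : nat_of_ord (pe s.-1) = i + s.-1 by rewrite pe_val //; lia.
have a2 : nat_of_ord (pe s) = i + s by rewrite pe_val //; lia.
have t1 : 1 <= F (pe s.-1).
  apply: F1; apply: (@joins_touch _ _ _ _ _ (v s.-1)); rewrite joins_sym.
  have := hpath' (e := pe s.-1) (t := s.-1); rewrite prednK; last by lia.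
  by apply => //; lia.
have t2 : 1 <= F (pe s).
  apply: F1; apply: (@joins_touch _ _ _ _ _ (v s.+1)).
  by apply: hpath' => //; lia.
have t3 := F1 g tg.
have d12 : pe s != pe s.-1 by apply/eqP => /(congr1 (@nat_of_ord m)); rewrite a1 a2; lia.
have dg1 : g != pe s.-1 by apply/eqP => /(congr1 (@nat_of_ord m)); rewrite a1; move/eqP: n1.
have dg2 : g != pe s by apply/eqP => /(congr1 (@nat_of_ord m)); rewrite a2; move/eqP: n2.
rewrite (bigD1 (pe s.-1)) //= (bigD1 (pe s)) //= (bigD1 g) /= in hsum; last by rewrite dg1 dg2.
lia.
Qed.

Definition inC (a b : nat) : pred V := fun x => has (fun s => x == v s) (iota a (b.+1 - a)).

Lemma inCP a b x : reflect (exists2 s, a <= s <= b & x = v s) (x \in inC a b).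
Proof.
apply: (iffP hasP) => [[s]|[s sab ->]].
  rewrite mem_iota => sr /eqP ->; exists s => //; lia.
by exists s => //; rewrite mem_iota; lia.
Qed.

Lemma closedC a b (F : {set 'I_m}) : 1 <= a -> b <= k ->
  (forall g : 'I_m, nat_of_ord g = i + a.-1 -> g \notin F) ->
  (forall g : 'I_m, nat_of_ord g = i + b -> g \notin F) ->
  forall x z g, x \in inC a b -> g \in F -> joins ends g x z -> z \in inC a b.
Proof.
move=> a1 bk ha hb x z g /inCP[s sab ->] gF j.
have [gv|gv] := deg_touch (s := s) (g := g) ltac:(lia) (joins_touch j).
- case: (eqVneq s a) => [sa|sa].
    by move: (ha g); rewrite gv sa => /(_ erefl); rewrite gF.
  have j' := hpath' (e := g) (t := s.-1) ltac:(lia) gv.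
  rewrite prednK in j'; last by lia.
  rewrite joins_sym in j'.
  have -> := joins_other (vneq _ _ _) j' j; try lia.
    by apply/inCP; exists s.-1 => //; lia.
- case: (eqVneq s b) => [sb|sb].
    by move: (hb g); rewrite gv sb => /(_ erefl); rewrite gF.
  have j' := hpath' (e := g) (t := s) ltac:(lia) gv.
  have -> := joins_other (vneq _ _ _) j' j; try lia.
    by apply/inCP; exists s.+1 => //; lia.
Qed.


Lemma joins_cases (f : 'I_m) a b : joins ends f a b ->
  ((ends f).1 = a /\ (ends f).2 = b) \/ ((ends f).1 = b /\ (ends f).2 = a).
Proof. by rewrite /joins; case/orP=> /andP[/eqP-> /eqP->]; [left|right]. Qed.

Lemma conn_joins (F : {set 'I_m}) (f : 'I_m) a b : joins ends f a b ->
  conn ends F a b -> conn ends F (ends f).1 (ends f).2.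
Proof. by case/joins_cases=> [[-> ->]|[-> ->]] // ; rewrite conn_sym. Qed.

Variables (S : {set 'I_m}) (hS : spanning_tree ends S).

Lemma notactive e f : reconnects ends S e f -> f < e -> ~~ int_active ends S e.
Proof.
move=> rec fe; apply/forallPn; exists f; rewrite negb_imply rec /=; by rewrite -ltnNge.
Qed.

Lemma Dwit j r (e f : 'I_m) : j < r <= k -> (forall g : 'I_m, nat_of_ord g = i + j -> g \notin S) ->
  nat_of_ord e = i + r -> nat_of_ord f = i + j -> reconnects ends S e f.
Proof.
move=> jr hj ev fv; rewrite /reconnects; apply/negP => c.
have cl := @closedC j.+1 r (S :\ e) ltac:(lia) ltac:(lia).
have cl' : forall x z g, x \in inC j.+1 r -> g \in S :\ e -> joins ends g x z -> z \in inC j.+1 r.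
  apply: cl => g gv; rewrite !inE.
    by rewrite (negbTE (hj g _)) ?andbF.
  have -> : g = e by apply: ord_inj; rewrite gv ev.
  by rewrite eqxx.
have jf := hpath' (e := f) (t := j) ltac:(lia) fv.
have inj1 : v j.+1 \in inC j.+1 r by apply/inCP; exists j.+1 => //; lia.
have nj : v j \notin inC j.+1 r.
  apply/negP => /inCP[s ss /hvinj]; lia.
case/joins_cases: jf => [[e1 e2]|[e1 e2]]; rewrite e1 e2 in c.
- rewrite conn_sym in c; by rewrite (conn_closed cl' c inj1) in nj.
- by rewrite (conn_closed cl' c inj1) in nj.
Qed.

Lemma Lactive j r (e : 'I_m) : r < j <= k -> (forall g : 'I_m, nat_of_ord g = i + j -> g \notin S) ->
  nat_of_ord e = i + r -> e \in S -> int_active ends S e.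
Proof.
move=> rj hj ev eS; apply/forallP => f; apply/implyP => rec.
have cl := @closedC r.+1 j (S :\ e) ltac:(lia) ltac:(lia).
have cl' : forall x z g, x \in inC r.+1 j -> g \in S :\ e -> joins ends g x z -> z \in inC r.+1 j.
  apply: cl => g gv; rewrite !inE.
    have -> : g = e by apply: ord_inj; rewrite gv ev.
    by rewrite eqxx.
  by rewrite (negbTE (hj g _)) ?andbF.
have je := hpath' (e := e) (t := r) ltac:(lia) ev.
rewrite joins_sym in je.
have eC : ((ends e).1 \in inC r.+1 j) || ((ends e).2 \in inC r.+1 j).
  have inj1 : v r.+1 \in inC r.+1 j by apply/inCP; exists r.+1 => //; lia.
  by case/orP: (joins_touch je) => /eqP->; rewrite inj1 ?orbT.
have := touchC hS.1 eS rec cl' eC.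
have H : forall x, x \in inC r.+1 j -> ((ends f).1 == x) || ((ends f).2 == x) -> e <= f.
  move=> x /inCP[s ss ->] t.
  have [fv|fv] := deg_touch (s := s) (g := f) ltac:(lia) t; rewrite fv ev; lia.
case/orP => h; apply: (H _ h); by rewrite eqxx ?orbT.
Qed.

Lemma dcase j (e : 'I_m) : 0 < j <= k -> nat_of_ord e = i + j -> e \notin S ->
  (forall g : 'I_m, nat_of_ord g = i + j.-1 -> g \in S) -> ~~ ext_active ends S e.
Proof.
move=> jk ev eS hS1.
have fv : nat_of_ord (pe j.-1) = i + j.-1 by rewrite pe_val //; lia.
set f := pe j.-1 in fv *.
have fS := hS1 f fv.
have ef : e != f by apply/eqP => /(congr1 (@nat_of_ord m)); rewrite ev fv; lia.
apply/forallPn; exists f; rewrite negb_imply; apply/andP; split; last by rewrite -ltnNge ev fv; lia.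
rewrite /on_cycle !inE fS orbT /=.
have jf := hpath' (e := f) (t := j.-1) ltac:(lia) fv.
rewrite prednK in jf; last by lia.
apply: (conn_joins jf).
have sub : S :\ f \subset (e |: S) :\ f.
  by apply/subsetP=> x; rewrite !inE => /andP[-> ->]; rewrite orbT.
have je := hpath' (e := e) (t := j) ltac:(lia) ev.
have c2 : conn ends ((e |: S) :\ f) (v j.+1) (v j).
  apply: (@conn_edge _ _ _ _ e); first by rewrite !inE ef eqxx.
  by rewrite joins_sym.
apply: conn_trans c2.
apply: (conn_mono sub).
have ncj : ~~ conn ends (S :\ f) (v j) (v j.+1).
  apply/negP => c.
  have cl := @closedC j j (S :\ f) ltac:(lia) ltac:(lia).
  have cl' : forall x z g, x \in inC j j -> g \in S :\ f -> joins ends g x z -> z \in inC j j.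
    apply: cl => g gv; rewrite !inE.
      have -> : g = f by apply: ord_inj; rewrite gv fv.
      by rewrite eqxx.
    apply/negP => /andP[_ gS]; move/negP: eS; apply.
    by have -> : e = g by apply: ord_inj; rewrite gv ev.
  have inj : v j \in inC j j by apply/inCP; exists j => //; lia.
  have := conn_closed cl' c inj.
  move/inCP=> [s ss /hvinj]; lia.
have := tree_split (v j.+1) hS.1 fS.
case/joins_cases: jf => [[-> ->]|[-> ->]]; case/orP => // c; by rewrite c in ncj.
Qed.


Lemma path0 b (F : {set 'I_m}) : b <= k.+1 ->
  (forall g : 'I_m, i <= g < i + b -> g \in F) -> conn ends F (v 0) (v b).
Proof.
elim: b => [|b IH] bk hF; first exact: conn_refl.
apply: (conn_trans (IH ltac:(lia) _)).
  move=> g gv; apply: hF; lia.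
have pv : nat_of_ord (pe b) = i + b by rewrite pe_val //; lia.
apply: (@conn_edge _ _ _ _ (pe b)).
  apply: hF; rewrite pv; lia.
exact: hpath'.
Qed.

Section Case1.
Hypothesis allS : forall g : 'I_m, i <= g <= i + k -> g \in S.

Definition Q := S :\: [set g : 'I_m | i <= g <= i + k].
Definition K x := conn ends Q (v 0) x.

Lemma inQ (g : 'I_m) : g \in Q = (g \in S) && ~~ (i <= g <= i + k).
Proof. by rewrite !inE andbC. Qed.

Lemma noK u : 1 <= u <= k.+1 -> ~~ K (v u).
Proof.
move=> uk; case: (ltngtP u k.+1) => [uk'|uk2|ue]; [|by exfalso; lia|].
- apply/negP => c; rewrite /K conn_sym in c.
  have cl := @closedC u u Q ltac:(lia) ltac:(lia).
  have cl' : forall x z g, x \in inC u u -> g \in Q -> joins ends g x z -> z \in inC u u.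
    by apply: cl => g gv; rewrite inQ gv negb_and negbK; apply/orP; right; lia.
  have inj : v u \in inC u u by apply/inCP; exists u => //; lia.
  have := conn_closed cl' c inj.
  move/inCP=> [s ss /hvinj]; lia.
- subst u; apply/negP => c.
  have pv : nat_of_ord (pe k) = i + k by rewrite pe_val //; lia.
  have pS : pe k \in S by apply: allS; rewrite pv; lia.
  have := hS.2 (pe k) pS; move/negP; apply.
  apply: (conn_joins (hpath' (leqnn k) pv)).
  have c1 : conn ends (S :\ pe k) (v 0) (v k).
    apply: path0 => // g gv; rewrite !inE allS; last by lia.
    rewrite andbT; apply/eqP => /(congr1 (@nat_of_ord m)); rewrite pv => hh; move: gv; rewrite hh; lia.
  rewrite conn_sym in c1; apply: (conn_trans c1).
  apply: (conn_mono _ c); apply/subsetP=> g; rewrite inQ !inE => /andP[-> h].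
  rewrite andbT; apply/eqP => /(congr1 (@nat_of_ord m)); rewrite pv => gv; move: h; rewrite gv; lia.
Qed.

Lemma Keq r (e : 'I_m) x : r <= k -> nat_of_ord e = i + r ->
  (forall s, 1 <= s <= k -> x != v s) -> conn ends (S :\ e) (v 0) x = K x.
Proof.
move=> rk ev nx; apply/idP/idP; last first.
  apply: conn_mono; apply/subsetP=> g; rewrite inQ !inE => /andP[-> h].
  rewrite andbT; apply/eqP => ge; move: h; rewrite ge ev; lia.
pose C := [pred z | K z || (z \in inC 1 r)].
have cl : forall a b g, a \in C -> g \in S :\ e -> joins ends g a b -> b \in C.
  move=> a b g; rewrite !inE => aC /andP[ge gS] j.
  case: (boolP (i <= g <= i + k)) => gp; last first.
    have gQ : g \in Q by rewrite inQ gS gp.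
    case/orP: aC => [Ka|/inCP[s ss as_]].
      by apply/orP; left; exact: (conn_trans Ka (conn_edge gQ j)).
    subst a; have [gv|gv] := deg_touch (s := s) (g := g) ltac:(lia) (joins_touch j);
      move: gp; rewrite gv; lia.
  have gv : nat_of_ord g = i + (g - i) by lia.
  set t := g - i in gv.
  have jg := hpath' (e := g) (t := t) ltac:(lia) gv.
  have tr : t != r by apply/eqP => tr; move/eqP: ge; apply; apply: ord_inj; rewrite gv ev tr.
  case: (ltnP t r) => tr'.
    case/joins_cases: jg => [[e1 e2]|[e1 e2]]; case/joins_cases: j => [[f1 f2]|[f1 f2]];
      rewrite e1 e2 in f1 f2; subst a b;
      try (apply/orP; right; apply/inCP; exists t.+1 => //; lia);
      (case: (posnP t) => [t0|tp];
        [rewrite t0; apply/orP; left; rewrite /K; exact: conn_refl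
        | apply/orP; right; apply/inCP; exists t => //; lia]).
  exfalso.
  have : exists2 u, t <= u <= t.+1 & a = v u.
    by case/joins_cases: jg => [[e1 e2]|[e1 e2]]; case/joins_cases: j => [[f1 f2]|[f1 f2]];
      rewrite e1 e2 in f1 f2; subst a b; [exists t|exists t.+1|exists t.+1|exists t] => //; lia.
  case=> u uu au; subst a.
  case/orP: aC => [Ka|/inCP[s ss /hvinj]]; last by lia.
  by have := noK (u := u) ltac:(lia); rewrite Ka.
have v0C : v 0 \in C by rewrite inE /K conn_refl.
move=> c; have := conn_closed cl c v0C; rewrite inE => /orP[//|/inCP[s ss xs]].
by move: (nx s ltac:(lia)); rewrite xs eqxx.
Qed.


Lemma recon_indep r (e f : 'I_m) : r <= k -> nat_of_ord e = i + r -> ~~ (i <= f <= i + k) ->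
  reconnects ends S e f = ~~ (K (ends f).1 == K (ends f).2).
Proof.
move=> rk ev nf.
have eS : e \in S by apply: allS; rewrite ev; lia.
have ni : forall x, ((ends f).1 == x) || ((ends f).2 == x) -> forall s, 1 <= s <= k -> x != v s.
  move=> x t s ss; apply/eqP => xs; rewrite xs in t.
  have [fv|fv] := deg_touch ss t; move: nf; rewrite fv; lia.
rewrite /reconnects (two_classE (v 0) _ _ hS.1 eS) (Keq rk ev) ?(Keq rk ev) //;
  apply: ni; by rewrite eqxx ?orbT.
Qed.

Lemma part1 :
  (forall e : 'I_m, i <= e <= i + k -> int_active ends S e) \/
  (forall e : 'I_m, i <= e <= i + k -> ~~ int_active ends S e).
Proof.
have p0 : nat_of_ord (pe 0) = i + 0 by rewrite pe_val.
case: (boolP (int_active ends S (pe 0))) => h0; [left|right] => e ep.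
- apply/forallP => f; apply/implyP => rec.
  case: (boolP (i <= f <= i + k)) => fp.
    have fv : nat_of_ord f = i + (f - i) by lia.
    case: (eqVneq f e) => [-> //|fe].
    have fS : f \in S :\ e by rewrite !inE fe allS.
    by move: rec; rewrite /reconnects (conn_edge fS (joins_ends _ _)).
  have ev : nat_of_ord e = i + (e - i) by lia.
  rewrite (recon_indep (r := e - i) _ ev fp) in rec; last by lia.
  rewrite -(recon_indep (r := 0) _ p0 fp) in rec => //.
  move/forallP: h0 => /(_ f); rewrite rec /= p0; move: fp; lia.
- move/forallPn: h0 => [f]; rewrite negb_imply => /andP[rec]; rewrite -ltnNge p0 => fi.
  have fp : ~~ (i <= f <= i + k) by lia.
  rewrite (recon_indep (r := 0) _ p0 fp) // in rec.
  have ev : nat_of_ord e = i + (e - i) by lia.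
  apply: (notactive (f := f)); last by lia.
  rewrite (recon_indep (r := e - i) _ ev fp) //; lia.
Qed.

End Case1.

End Main.

Theorem lemma3p1 (V : finType) (m : nat) (ends : 'I_m -> V * V)
    (pos : 'I_m -> bool) (i k : nat) (v : nat -> V)
    (hk : (0 < k)%N) (hik : (i + k < m)%N)
    (* the path edges are positive *)
    (hpos : forall e : 'I_m, (i <= e <= i + k)%N -> pos e)
    (* the path P_(k+1) has distinct vertices v 0, ..., v (k+1) *)
    (hvinj : forall r s, (r <= k.+1)%N -> (s <= k.+1)%N -> v r = v s -> r = s)
    (* edge e_(i+r) joins v r and v (r+1), so the path is traversed in order *)
    (hpath : forall e : 'I_m, (i <= e <= i + k)%N ->
        joins ends e (v (e - i)%N) (v (e - i).+1))
    (* interior vertices have degree exactly two in G *)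
    (hdeg : forall r, (1 <= r <= k)%N -> degree ends (v r) = 2)
    (S : {set 'I_m}) (hS : spanning_tree ends S) :
  let a := activity ends pos S in
  let inP (e : 'I_m) := (i <= e <= i + k)%N in
  (* (1) *)
  ((forall e : 'I_m, inP e -> e \in S) ->
     (forall e : 'I_m, inP e -> a e = L) \/ (forall e : 'I_m, inP e -> a e = D))
  /\
  (* (2) *)
  (forall j, (0 < j <= k)%N ->
     (forall e : 'I_m, inP e -> (e \notin S <-> nat_of_ord e = (i + j)%N)) ->
     forall e : 'I_m, inP e ->
       a e = (if (e < i + j)%N then L else if nat_of_ord e == (i + j)%N then d else D))
  /\
  (* (3) *)
  ((forall e : 'I_m, inP e -> (e \notin S <-> nat_of_ord e = i)) ->
     forall e : 'I_m, inP e ->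
       (nat_of_ord e = i -> a e = l \/ a e = d) /\ (nat_of_ord e <> i -> a e = D)).
Proof.
intros a inP; subst a inP.
have actS : forall e : 'I_m, (i <= e <= i + k) -> e \in S ->
    activity ends pos S e = if int_active ends S e then L else D.
  by move=> e ep eS; rewrite /activity eS hpos.
have actN : forall e : 'I_m, (i <= e <= i + k) -> e \notin S ->
    activity ends pos S e = if ext_active ends S e then l else d.
  by move=> e ep eS; rewrite /activity (negbTE eS) hpos.
have Dw := Dwit hk hik hvinj hpath hdeg (S := S).
have La := Lactive hk hik hvinj hpath hdeg hS.
have dc := dcase hk hik hvinj hpath hdeg hS.
split; [|split].
- move=> allS; case: (part1 hk hik hvinj hpath hdeg hS allS) => h; [left|right] => e ep;
    rewrite actS ?allS //.
    by rewrite h.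
  by rewrite (negbTE (h e ep)).
- move=> j jk H.
  have notS : forall g : 'I_m, nat_of_ord g = i + j -> g \notin S.
    by move=> g gv; apply/(H g _).2 => //; rewrite gv; lia.
  have inS : forall g : 'I_m, (i <= g <= i + k) -> nat_of_ord g != i + j -> g \in S.
    move=> g gp gn; apply/negPn/negP => /(H g gp).1 gv.
    by rewrite gv eqxx in gn.
  move=> e ep.
  have ev : nat_of_ord e = i + (e - i) by lia.
  have pj : nat_of_ord (pe hik j) = i + j by rewrite pe_val //; lia.
  case: (ltngtP e (i + j)) => ej.
  + have eS : e \in S by apply: inS => //; apply/eqP; lia.
    rewrite actS // (La j (e - i) e) //; lia.
  + have eS : e \in S by apply: inS => //; apply/eqP; lia.
    have rec := Dw j (e - i) e (pe hik j) ltac:(lia) notS ev pj.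
    rewrite actS // (negbTE (notactive rec _)); last by rewrite pj.
    by [].

  + have eS : e \notin S by apply/(H e ep).2.
    rewrite actN // (negbTE (dc j e ltac:(lia) ej eS _)) //.
    move=> g gv; apply: inS; rewrite gv; lia.
- move=> H e ep; split => ei.
    have eS : e \notin S by apply/(H e ep).2.
    by rewrite actN //; case: (ext_active _ _ _); [left|right].
  have notS : forall g : 'I_m, nat_of_ord g = i + 0 -> g \notin S.
    by move=> g gv; apply/(H g _).2 => //; rewrite gv; lia.
  have eS : e \in S.
    by apply/negPn/negP => /(H e ep).1.
  have ev : nat_of_ord e = i + (e - i) by lia.
  have p0 : nat_of_ord (pe hik 0) = i + 0 by rewrite pe_val //; lia.
  have rec := Dw 0 (e - i) e (pe hik 0) ltac:(lia) notS ev p0.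
  by rewrite actS // (negbTE (notactive rec _)) // p0; lia.
Qed.
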